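(* Let $X$ be a $T_1$ topological space with at least three points. Then $\mathrm{diam}(\Gamma(C_c(X)_F))=\mathrm{gr}(\Gamma(C_c(X)_F))=3$.
   Context: $C_c(X)_F$ denotes the set of all functions $f:X\to\mathbb{R}$ whose range is countable and whose set of points of discontinuity is finite; it is a commutative ring under pointwise operations. $\Gamma(C_c(X)_F)$ is the zero-divisor graph: vertices are the nonzero zero divisors of $C_c(X)_F$, and distinct vertices $f,g$ are adjacent iff $fg=0$. The diameter is the maximum over pairs of vertices of the length of a shortest path between them; the girth is the length of a shortest cycle ($\infty$ if there is none). *)

(* Defs.v *)
From HB Require Import structures.
From mathcomp Require Import all_boot all_order all_algebra.
From mathcomp Require Import all_classical all_reals all_analysis.
Set Implicit Arguments. Unset Strict Implicit. Unset Printing Implicit Defensive.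
Import Order.TTheory GRing.Theory Num.Theory.
Import numFieldNormedType.Exports.
Local Open Scope classical_set_scope.
Local Open Scope ring_scope.

Definition in_CcF {X : topologicalType} {R : realType} (f : X -> R) : Prop :=
  countable (range f) /\ finite_set [set x : X | ~ {for x, continuous f}].

Definition fzero {X : Type} {R : realType} : X -> R := fun _ => 0.
Definition fmul {X : Type} {R : realType} (f g : X -> R) : X -> R :=
  fun x => f x * g x.

Definition zd_vertex {X : topologicalType} {R : realType} (f : X -> R) : Prop :=
  in_CcF f /\ f <> fzero /\
  exists g : X -> R, in_CcF g /\ g <> fzero /\ fmul f g = fzero.

Definition zd_adj {X : topologicalType} {R : realType} (f g : X -> R) : Prop :=
  zd_vertex f /\ zd_vertex g /\ f <> g /\ fmul f g = fzero.

Inductive walk {V : Type} (adj : V -> V -> Prop) : V -> V -> nat -> Prop :=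
| walk_nil u : walk adj u u 0
| walk_cons u w v n : adj u w -> walk adj w v n -> walk adj u v n.+1.

Definition graph_dist {V : Type} (adj : V -> V -> Prop) (u v : V) (n : nat) : Prop :=
  walk adj u v n /\ forall m, walk adj u v m -> (n <= m)%N.

Definition graph_diam {V : Type} (vert : V -> Prop) (adj : V -> V -> Prop)
  (d : nat) : Prop :=
  (forall u v, vert u -> vert v -> exists n, (n <= d)%N /\ walk adj u v n) /\
  (exists u v, vert u /\ vert v /\ graph_dist adj u v d).

Definition graph_cycle {V : Type} (adj : V -> V -> Prop) (n : nat) : Prop :=
  (3 <= n)%N /\ exists c : nat -> V,
    (forall i j, (i < n)%N -> (j < n)%N -> c i = c j -> i = j) /\
    (forall i, (i < n)%N -> adj (c i) (c ((i.+1) %% n)%N)).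

Definition graph_girth {V : Type} (adj : V -> V -> Prop) (g : nat) : Prop :=
  graph_cycle adj g /\ forall m, graph_cycle adj m -> (g <= m)%N.

(* Main.v *)
Require Import Defs.
From HB Require Import structures.
From mathcomp Require Import all_boot all_order all_algebra.
From mathcomp Require Import all_classical all_reals all_analysis.
Set Implicit Arguments. Unset Strict Implicit. Unset Printing Implicit Defensive.
Import Order.TTheory GRing.Theory Num.Theory.
Import numFieldNormedType.Exports.
Local Open Scope classical_set_scope.
Local Open Scope ring_scope.

Lemma cst_off_CcF (R : realType) (X : topologicalType) (hT1 : accessible_space X)
  (f : X -> R) (a : X) (c : R) : (forall x, x <> a -> f x = c) -> in_CcF f.
Proof.
move=> hf; split.
  apply: finite_set_countable.
  apply: (@sub_finite_set _ _ ([set c] `|` [set f a])); last first.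
    by rewrite finite_setU; split; exact: finite_set1.
  move=> _ [x _ <-]; have [->|xa] := pselect (x = a); first by right.
  by left; rewrite /= hf.
apply: (@sub_finite_set _ _ [set a]); last exact: finite_set1.
move=> x /= hx; apply: contrapT => xa; apply: hx.
have hn : \forall y \near x, f y = c.
  have : open (~` [set a]) by rewrite openC; exact: accessible_closed_set1.
  move=> H; apply: filterS (@open_nbhs_nbhs _ x _ (conj H xa)) => y /= ya.
  by rewrite hf.
have := @near_cst_continuous X R c f x hn.
exact.
Qed.

Definition pt (R : realType) (X : topologicalType) (a : X) (u v : R) : X -> R :=
  fun x => if `[< x = a >] then u else v.

Section S.
Variables (R : realType) (X : topologicalType) (hT1 : accessible_space X).

Lemma pt_a (a : X) (u v : R) : pt a u v a = u.
Proof. by rewrite /pt asboolT. Qed.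

Lemma pt_ne (a x : X) (u v : R) : x <> a -> pt a u v x = v.
Proof. by move=> xa; rewrite /pt asboolF. Qed.

Lemma pt_CcF (a : X) (u v : R) : in_CcF (pt a u v).
Proof. by apply: (cst_off_CcF hT1 (a:=a) (c:=v)) => x xa; rewrite pt_ne. Qed.

Lemma pt_nz (a : X) (u v : R) : u != 0 -> pt a u v <> fzero.
Proof.
move=> u0 h; have := congr1 (fun g => g a) h; rewrite /fzero pt_a => /eqP.
by rewrite (negbTE u0).
Qed.

Lemma pt_nz' (a b : X) (u v : R) : b <> a -> v != 0 -> pt a u v <> fzero.
Proof.
move=> ba v0 h; have := congr1 (fun g => g b) h; rewrite /fzero pt_ne // => /eqP.
by rewrite (negbTE v0).
Qed.

Definition e (a : X) : X -> R := pt a 1 0.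
Definition n (a : X) : X -> R := pt a 0 1.

Lemma fmulC (f g : X -> R) : fmul f g = fmul g f.
Proof. by apply: funext => x; rewrite /fmul mulrC. Qed.

Lemma adj_sym (f g : X -> R) : zd_adj f g -> zd_adj g f.
Proof. by move=> [vf [vg [fg m]]]; split => //; split => //; split; [by move=> h; apply: fg|rewrite fmulC]. Qed.

Lemma e_vertex (a b : X) : b <> a -> zd_vertex (e a).
Proof.
move=> ba; split; first exact: pt_CcF.
split; first by apply: pt_nz; rewrite oner_neq0.
exists (e b); split; first exact: pt_CcF.
split; first by apply: pt_nz; rewrite oner_neq0.
apply: funext => x; rewrite /fmul /fzero /e.
have [->|xa] := pselect (x = a); first by rewrite (pt_ne (a:=b)) ?mulr0 //; move=> h; apply: ba.
by rewrite pt_ne // mul0r.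
Qed.

Lemma vertex_zero (f : X -> R) : zd_vertex f -> exists a, f a = 0.
Proof.
move=> [_ [_ [g [_ [g0 fg]]]]].
have [x gx] : exists x, g x != 0.
  apply: contrapT => h; apply: g0; apply: funext => x.
  by apply/eqP; apply: contrapT => /negP gx; apply: h; exists x.
exists x; have := congr1 (fun h => h x) fg; rewrite /fmul /fzero => /eqP.
by rewrite mulf_eq0 (negbTE gx) orbF => /eqP.
Qed.

Lemma adj_e (f : X -> R) (a b : X) : b <> a -> zd_vertex f -> f a = 0 ->
  zd_adj f (e a).
Proof.
move=> ba vf fa; split => //; split; first exact: (e_vertex ba).
split.
  move=> h; have := congr1 (fun g => g a) h; rewrite fa /e pt_a => /eqP.
  by rewrite eq_sym oner_eq0.
apply: funext => x; rewrite /fmul /fzero /e.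
have [->|xa] := pselect (x = a); first by rewrite fa mul0r.
by rewrite pt_ne // mulr0.
Qed.

Lemma adj_ee (a b : X) : b <> a -> zd_adj (e a) (e b).
Proof.
move=> ba; apply: adj_sym.
have ab : a <> b by move=> h; apply: ba; rewrite h.
apply: (adj_e (b:=b) ba).
  exact: (e_vertex (a:=b) ab).
by rewrite /e pt_ne.
Qed.

Lemma walk_inv (V : Type) (adj : V -> V -> Prop) u v m : walk adj u v m ->
  (m = 0%N /\ u = v) \/ (exists w m', m = m'.+1 /\ adj u w /\ walk adj w v m').
Proof. case=> [?|u' w v' m' h1 h2]; [by left | right; by exists w, m']. Qed.

End S.

Lemma n_vertex (R : realType) (X : topologicalType) (hT1 : accessible_space X)
  (a b : X) : b <> a -> zd_vertex (@n R X a).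
Proof.
move=> ba; split; first exact: pt_CcF.
split; first by apply: (pt_nz' ba); rewrite oner_neq0.
exists (e R a); split; first exact: pt_CcF.
split; first by apply: pt_nz; rewrite oner_neq0.
apply: funext => x; rewrite /fmul /fzero /e /n.
have [->|xa] := pselect (x = a); first by rewrite pt_a mul0r.
by rewrite [pt a 1 0 x]pt_ne // mulr0.
Qed.

Lemma e_inj (R : realType) (X : topologicalType) (x y : X) : @e R X x = e R y -> x = y.
Proof.
move=> h; have := congr1 (fun g => g x) h; rewrite /e pt_a.
have [//|xy] := pselect (x = y).
by rewrite pt_ne // => /eqP; rewrite oner_eq0.
Qed.

Theorem theorem8p7 (R : realType) (X : topologicalType)
  (hT1 : @accessible_space X)
  (h3 : exists a b c : X, a <> b /\ a <> c /\ b <> c) :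
  graph_diam (@zd_vertex X R) (@zd_adj X R) 3 /\
  graph_girth (@zd_adj X R) 3.
Proof.
have [a [b [c [ab [ac bc]]]]] := h3.
have ba : b <> a by move=> h; apply: ab; rewrite h.
have ca : c <> a by move=> h; apply: ac; rewrite h.
have cb : c <> b by move=> h; apply: bc; rewrite h.
have other : forall x : X, exists y, y <> x.
  move=> x; have [->|xa] := pselect (x = a); first by exists b.
  by exists a => h; apply: xa; rewrite h.
split; first split.
- move=> u v vu vv.
  have [p up] := vertex_zero vu; have [q vq] := vertex_zero vv.
  have [y yp] := other p; have [z zq] := other q.
  have [pq|pq] := pselect (p = q).
    exists 2%N; split => //.
    apply: walk_cons (adj_e hT1 yp vu up) _.
    rewrite pq; apply: walk_cons (adj_sym (adj_e hT1 zq vv vq)) _.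
    exact: walk_nil.
  exists 3%N; split => //.
  apply: walk_cons (adj_e hT1 yp vu up) _.
  have qp : q <> p by move=> h; apply: pq; rewrite h.
  apply: walk_cons (adj_ee R hT1 qp) _.
  apply: walk_cons (adj_sym (adj_e hT1 zq vv vq)) _.
  exact: walk_nil.
- have va : zd_vertex (n R a) := @n_vertex R X hT1 a b ba.
  have vb : zd_vertex (n R b) := @n_vertex R X hT1 b a ab.
  have na_a : @n R X a a = 0 by rewrite /n pt_a.
  have nb_b : @n R X b b = 0 by rewrite /n pt_a.
  exists (n R a), (n R b); split => //; split => //; split.
    apply: walk_cons (adj_e hT1 ba va na_a) _.
    apply: walk_cons (adj_ee R hT1 ba) _.
    apply: walk_cons (adj_sym (adj_e hT1 ab vb nb_b)) _.
    exact: walk_nil.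
  move=> m w; case: m w => [|[|[|m]]] w //.
  + case: (walk_inv w) => [[_ h]|[? [? [//]]]].
    have := congr1 (fun g => g a) h; rewrite na_a /n pt_ne // => /eqP.
    by rewrite eq_sym oner_eq0.
  + case: (walk_inv w) => [[//]|[w1 [m1 [[<-] [adj1 w']]]]].
    case: (walk_inv w') => [[_ h]|[? [? [//]]]].
    move: adj1; rewrite h => -[_ [_ [_ hm]]].
    have := congr1 (fun g => g c) hm; rewrite /fmul /fzero /n !pt_ne // mulr1 => /eqP.
    by rewrite oner_eq0.
  + case: (walk_inv w) => [[//]|[w1 [m1 [[<-] [adj1 w']]]]].
    case: (walk_inv w') => [[//]|[w2 [m2 [[<-] [adj2 w'']]]]].
    case: (walk_inv w'') => [[_ h]|[? [? [//]]]].
    move: adj2; rewrite h => -[vw1 [_ [_ hm2]]].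
    move: adj1 => -[_ [_ [_ hm1]]].
    have [x hx] : exists x, w1 x != 0.
      apply: contrapT => hh; apply: (proj1 (proj2 vw1)); apply: funext => x.
      by apply/eqP; apply: contrapT => /negP gx; apply: hh; exists x.
    have := congr1 (fun g => g x) hm1; have := congr1 (fun g => g x) hm2.
    rewrite /fmul /fzero => /eqP; rewrite mulf_eq0 (negbTE hx) /= => h2 /eqP.
    rewrite mulf_eq0 (negbTE hx) orbF => h1.
    have [xa|xa] := pselect (x = a).
      by move: h2; rewrite xa /n pt_ne // oner_eq0.
    by move: h1; rewrite /n pt_ne // oner_eq0.
- split; last by move=> m [].
  split => //.
  exists (fun i => if i == 0%N then @e R X a else if i == 1%N then e R b else e R c).
  split.
    move=> i j; case: i => [|[|[|i]]] //; case: j => [|[|[|j]]] //= _ _ /e_inj //;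
      by move=> h; exfalso; do ?[apply: ab|apply: ac|apply: bc]; rewrite h.
  move=> i; case: i => [|[|[|i]]] //= _.
  + exact: (@adj_ee R X hT1 _ _ ba).
  + exact: (@adj_ee R X hT1 _ _ cb).
  + exact: (@adj_ee R X hT1 _ _ ac).
Qed.
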